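(* For all distinct $a,b\in\mathbb{B}^2$, \[ h_{\mathbb{B}^2}(a,b)\le\rho_{\mathbb{B}^2}(a,b)\le\frac{h_{\mathbb{B}^2}(a,b)}{\sqrt{1-m^2}}, \] where $m$ is the Euclidean distance from the origin to the line $L[a,b]$ through $a$ and $b$. Equality holds if $m=0$.
   Context: $\mathbb{B}^2$ is the unit disk. Hyperbolic metric: $\mathrm{sh}\frac{\rho_{\mathbb{B}^2}(a,b)}{2}=\frac{|a-b|}{\sqrt{(1-|a|^2)(1-|b|^2)}}$. Hilbert metric: for distinct $a,b$ in a bounded convex domain $G$, let $u,v$ be the intersections of the line through $a,b$ with $\partial G$, ordered $u,a,b,v$ on the line; $h_G(a,b)=\log\frac{|u-b||a-v|}{|u-a||b-v|}$. *)

(* Defs.v *)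
From Stdlib Require Import Reals Lra.
Open Scope R_scope.

Definition pt := (R * R)%type.

Definition padd (p q : pt) : pt := (fst p + fst q, snd p + snd q).
Definition psub (p q : pt) : pt := (fst p - fst q, snd p - snd q).
Definition pscale (t : R) (p : pt) : pt := (t * fst p, t * snd p).
Definition dot (p q : pt) : R := fst p * fst q + snd p * snd q.
Definition norm (p : pt) : R := sqrt (dot p p).

Definition in_disk (p : pt) : Prop := norm p < 1.

Definition rho_disk (a b : pt) : R :=
  2 * arcsinh (norm (psub a b) /
               sqrt ((1 - norm a ^ 2) * (1 - norm b ^ 2))).

(* The points with |a + t(b-a)| = 1 are the roots of
   A t^2 + 2 B t + C = 0, with A = |b-a|^2, B = a.(b-a), C = |a|^2 - 1.
   For a, b in the disk with a <> b, C < 0 so the roots are t_u < 0 < 1 < t_v,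
   giving the boundary points u (beyond a) and v (beyond b), ordered u,a,b,v. *)
Definition line_pt (a b : pt) (t : R) : pt := padd a (pscale t (psub b a)).

Definition disk_tu (a b : pt) : R :=
  let A := dot (psub b a) (psub b a) in
  let B := dot a (psub b a) in
  let C := dot a a - 1 in
  (- B - sqrt (B ^ 2 - A * C)) / A.

Definition disk_tv (a b : pt) : R :=
  let A := dot (psub b a) (psub b a) in
  let B := dot a (psub b a) in
  let C := dot a a - 1 in
  (- B + sqrt (B ^ 2 - A * C)) / A.

Definition disk_u (a b : pt) : pt := line_pt a b (disk_tu a b).
Definition disk_v (a b : pt) : pt := line_pt a b (disk_tv a b).

Definition hilbert_disk (a b : pt) : R :=
  let u := disk_u a b in
  let v := disk_v a b in
  ln ((norm (psub u b) * norm (psub a v)) /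
      (norm (psub u a) * norm (psub b v))).

(* Euclidean distance from the origin to the line L[a,b] (a <> b):
   the distance from 0 to the foot of the perpendicular,
   at parameter t0 = - a.(b-a) / |b-a|^2. *)
Definition dist0_line (a b : pt) : R :=
  norm (line_pt a b (- dot a (psub b a) / dot (psub b a) (psub b a))).

(* Main.v *)
Require Import Defs.
From Stdlib Require Import Reals Lra Psatz.
From Coquelicot Require Coquelicot.
Module Conv.
Import Coquelicot.Coquelicot.
Open Scope R_scope.
Lemma cosh_mono a b : 0 <= a <= b -> cosh a <= cosh b.
Proof.
  intros [Ha Hab]. unfold cosh.
  assert (HX : 1 <= exp a). { rewrite <- exp_0. destruct Ha as [Ha|Ha]; [left; apply exp_increasing; lra| rewrite Ha; lra]. }
  assert (HY : exp a <= exp b). { destruct Hab as [H|H]; [left; apply exp_increasing; lra| rewrite H; lra]. }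
  rewrite !exp_Ropp.
  set (X := exp a) in *. set (Y := exp b) in *.
  assert (0 < X) by lra. assert (0 < Y) by lra.
  assert (Y + / Y - (X + / X) = (Y - X) * (1 - /(X*Y))) by (field; lra).
  assert (/(X*Y) <= 1). { rewrite <- Rinv_1. apply Rinv_le_contravar; nra. }
  nra.
Qed.

Lemma sinh_conv k y : 1 <= k -> 0 <= y -> k * sinh y <= sinh (k*y).
Proof.
  intros Hk Hy. destruct Hy as [Hy|Hy].
  2:{ subst. rewrite Rmult_0_r. unfold sinh. rewrite Ropp_0, exp_0. lra. }
  destruct (MVT_cor2 (fun x => sinh (k*x) - k * sinh x)
              (fun x => k * cosh (k*x) - k * cosh x) 0 y Hy) as [c [Hc1 Hc2]].
  { intros c _. apply is_derive_Reals. unfold sinh, cosh.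
    auto_derive; [auto | field]. }
  assert (cosh c <= cosh (k*c)) by (apply cosh_mono; nra).
  assert (E0 : sinh (k*0) - k * sinh 0 = 0).
  { rewrite Rmult_0_r. unfold sinh. rewrite Ropp_0, exp_0. lra. }
  cbv beta in Hc1. rewrite E0 in Hc1.
  assert (0 <= (k * cosh (k * c) - k * cosh c) * (y - 0)) by (apply Rmult_le_pos; nra).
  lra.
Qed.

Lemma arcsinh_conv k S : 1 <= k -> 0 <= S -> arcsinh (k*S) <= k * arcsinh S.
Proof.
  intros Hk HS.
  rewrite <- (arcsinh_sinh (k * arcsinh S)).
  apply arcsinh_le.
  rewrite <- (sinh_arcsinh S) at 1.
  apply sinh_conv; auto.
  rewrite <- arcsinh_0. apply arcsinh_le; auto.
Qed.
End Conv.
Import Conv.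

Lemma hil_alg A B C s : 0 < A -> C < 0 -> 0 < -C-2*B-A -> B + C < 0 ->
  s = sqrt (B^2 - A*C) ->
  ln (((1-(-B - s)/A)*((-B + s)/A))/((-((-B - s)/A))*((-B + s)/A-1)))
    = 2*arcsinh (s / sqrt (-C*(-C-2*B-A)))
  /\ (-B - s)/A < 0 /\ 1 < (-B + s)/A.
Proof.
  intros HA HC HE HBC Hsdef.
  assert (HD : 0 < B^2 - A*C) by nra.
  assert (Hs2 : s^2 = B^2 - A*C) by (rewrite Hsdef; apply pow2_sqrt; lra).
  assert (Hs : 0 < s) by (rewrite Hsdef; apply sqrt_lt_R0; lra).
  clear Hsdef.
  assert (HsB1 : B < s) by nra.
  assert (HsB2 : -B < s) by nra.
  assert (HsAB : A + B < s) by nra.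
  split; [|split].
  2:{ apply Rmult_lt_reg_r with A; auto. unfold Rdiv. rewrite Rmult_assoc, Rinv_l; lra. }
  2:{ apply Rmult_lt_reg_r with A; auto. unfold Rdiv. rewrite Rmult_assoc, Rinv_l; lra. }
  remember (sqrt (-C*(-C-2*B-A))) as w eqn:Hwdef.
  assert (Hw2 : w^2 = -C*(-C-2*B-A)) by (rewrite Hwdef; apply pow2_sqrt; nra).
  assert (Hw : 0 < w) by (rewrite Hwdef; apply sqrt_lt_R0; nra).
  clear Hwdef.
  unfold arcsinh.
  assert (Hsq : sqrt ((s/w)^2 + 1) = -(B+C)/w).
  { apply sqrt_lem_1.
    - assert (0 <= (s/w)^2) by apply pow2_ge_0. lra.
    - apply Rmult_le_pos; [lra|]. left; apply Rinv_0_lt_compat; auto.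
    - assert (Hz : s^2 + w^2 - (B+C)^2 = 0) by (rewrite Hs2, Hw2; ring).
      assert (Hq : (s/w)^2 + 1 - (-(B+C)/w) * (-(B+C)/w) = (s^2 + w^2 - (B+C)^2)/w^2) by (field; lra).
      rewrite Hz in Hq. unfold Rdiv in Hq. rewrite Rmult_0_l in Hq. lra. }
  rewrite Hsq.
  assert (HY : 0 < s/w + -(B+C)/w).
  { unfold Rdiv. rewrite <- Rmult_plus_distr_r. apply Rmult_lt_0_compat; [lra|].
    apply Rinv_0_lt_compat; auto. }
  remember (s/w + -(B+C)/w) as Y eqn:HYdef.
  replace (2 * ln Y) with (ln (Y*Y)) by (rewrite ln_mult; auto; ring).
  f_equal.
  assert (HC' : C = (B^2 - s^2)/A) by (rewrite Hs2; field; lra).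
  assert (Hkey : (A+B+s)*(s-B)*w^2 = (s-B-C)^2*(s+B)*(s-B-A)).
  { rewrite Hw2. rewrite HC'. field. lra. }
  assert (HX : ((1-(-B - s)/A)*((-B + s)/A))/((-((-B - s)/A))*((-B + s)/A-1))
              = ((A+B+s)*(s-B))/((s+B)*(s-B-A))).
  { field. repeat split; lra. }
  rewrite HX.
  assert (HYY : Y*Y = (s-B-C)^2/w^2) by (rewrite HYdef; field; lra).
  rewrite HYY.
  assert (0 < (s+B)*(s-B-A)) by nra.
  assert (0 < w^2) by nra.
  apply Rmult_eq_reg_r with (((s+B)*(s-B-A))*w^2).
  2:{ apply Rgt_not_eq. apply Rmult_lt_0_compat; nra. }
  field_simplify; try lra.

Qed.
Section G.
Variables a b : pt.
Let A := dot (psub b a) (psub b a).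
Let B := dot a (psub b a).
Lemma L_ub t : dot (psub (line_pt a b t) b) (psub (line_pt a b t) b) = (1-t)^2 * A.
Proof. unfold A; destruct a, b; unfold dot, psub, line_pt, padd, pscale; simpl; ring. Qed.
Lemma L_av t : dot (psub a (line_pt a b t)) (psub a (line_pt a b t)) = t^2 * A.
Proof. unfold A; destruct a, b; unfold dot, psub, line_pt, padd, pscale; simpl; ring. Qed.
Lemma L_ua t : dot (psub (line_pt a b t) a) (psub (line_pt a b t) a) = t^2 * A.
Proof. unfold A; destruct a, b; unfold dot, psub, line_pt, padd, pscale; simpl; ring. Qed.
Lemma L_bv t : dot (psub b (line_pt a b t)) (psub b (line_pt a b t)) = (1-t)^2 * A.
Proof. unfold A; destruct a, b; unfold dot, psub, line_pt, padd, pscale; simpl; ring. Qed.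
Lemma L_ab : dot (psub a b) (psub a b) = A.
Proof. unfold A; destruct a, b; unfold dot, psub; simpl; ring. Qed.
Lemma L_bb : dot b b = dot a a + 2*B + A.
Proof. unfold A, B; destruct a, b; unfold dot, psub; simpl; ring. Qed.
Lemma L_line t : dot (line_pt a b t) (line_pt a b t) = dot a a + 2*t*B + t^2*A.
Proof. unfold A, B; destruct a, b; unfold dot, psub, line_pt, padd, pscale; simpl; ring. Qed.
Lemma L_BC : B + (dot a a - 1) = dot a b - 1.
Proof. unfold B; destruct a, b; unfold dot, psub; simpl; ring. Qed.
Lemma L_ab1 : dot a a < 1 -> dot b b < 1 -> dot a b < 1.
Proof. destruct a as [x y], b as [z w]; unfold dot; simpl; intros; pose proof (pow2_ge_0 (x-z)); pose proof (pow2_ge_0 (y-w)); nra. Qed.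
Lemma L_Apos : a <> b -> 0 < A.
Proof. unfold A; destruct a as [x y], b as [z w]; unfold dot, psub; simpl; intros Hne.
  destruct (Rle_or_lt ((z-x)*(z-x)+(w-y)*(w-y)) 0) as [H|H]; auto.
  exfalso. apply Hne. pose proof (pow2_ge_0 (z-x)); pose proof (pow2_ge_0 (w-y)).
  assert ((z-x)*(z-x) = 0) by nra. assert ((w-y)*(w-y) = 0) by nra.
  apply Rmult_integral in H2; apply Rmult_integral in H3.
  assert (z = x) by lra. assert (w = y) by lra. subst; auto. Qed.
End G.

Lemma dot_ge0 p : 0 <= dot p p.
Proof. destruct p; unfold dot; simpl; nra. Qed.

Lemma norm_sq p : norm p ^ 2 = dot p p.
Proof. unfold norm; apply pow2_sqrt, dot_ge0. Qed.

Lemma disk_dot p : in_disk p -> dot p p < 1.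
Proof. unfold in_disk, norm. intros H.
  destruct (Rlt_or_le (dot p p) 1) as [h|h]; auto.
  exfalso. apply sqrt_le_1_alt in h. rewrite sqrt_1 in h. lra. Qed.

Lemma sqrt_sqA x A : 0 <= x -> 0 <= A -> sqrt (x^2 * A) = x * sqrt A.
Proof. intros. rewrite sqrt_mult_alt by (apply pow2_ge_0). rewrite sqrt_pow2; auto. Qed.

Lemma N_ub a b t : t <= 1 -> norm (psub (line_pt a b t) b) = (1-t) * sqrt (dot (psub b a) (psub b a)).
Proof. intros. unfold norm. rewrite L_ub. apply sqrt_sqA; [lra | apply dot_ge0]. Qed.
Lemma N_av a b t : 0 <= t -> norm (psub a (line_pt a b t)) = t * sqrt (dot (psub b a) (psub b a)).
Proof. intros. unfold norm. rewrite L_av. apply sqrt_sqA; [lra | apply dot_ge0]. Qed.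
Lemma N_ua a b t : t <= 0 -> norm (psub (line_pt a b t) a) = (-t) * sqrt (dot (psub b a) (psub b a)).
Proof. intros. unfold norm. rewrite L_ua. replace (t^2) with ((-t)^2) by ring. apply sqrt_sqA; [lra | apply dot_ge0]. Qed.
Lemma N_bv a b t : 1 <= t -> norm (psub b (line_pt a b t)) = (t-1) * sqrt (dot (psub b a) (psub b a)).
Proof. intros. unfold norm. rewrite L_bv. replace ((1-t)^2) with ((t-1)^2) by ring. apply sqrt_sqA; [lra | apply dot_ge0]. Qed.

Lemma div_neg x A : 0 < A -> x / A < 0 -> x < 0.
Proof. intros HA H. replace x with ((x/A)*A) by (field; lra). nra. Qed.
Lemma div_gt1 x A : 0 < A -> 1 < x / A -> A < x.
Proof. intros HA H. replace x with ((x/A)*A) by (field; lra). nra. Qed.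

Theorem corollary3p6 (a b : pt) :
  in_disk a -> in_disk b -> a <> b ->
  let m := dist0_line a b in
  hilbert_disk a b <= rho_disk a b /\
  rho_disk a b <= hilbert_disk a b / sqrt (1 - m ^ 2) /\
  (m = 0 -> hilbert_disk a b = rho_disk a b /\
            rho_disk a b = hilbert_disk a b / sqrt (1 - m ^ 2)).
Proof.
  intros Ha Hb Hne m.
  pose proof (disk_dot a Ha) as Ha'. pose proof (disk_dot b Hb) as Hb'.
  pose proof (L_Apos a b Hne) as HA.
  pose proof (L_bb a b) as Hbb. pose proof (L_BC a b) as HBC0. pose proof (L_ab1 a b Ha' Hb') as Hab.
  assert (HC : dot a a - 1 < 0) by lra.
  assert (HE : 0 < -(dot a a - 1) - 2 * dot a (psub b a) - dot (psub b a) (psub b a)) by lra.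
  assert (HBC : dot a (psub b a) + (dot a a - 1) < 0) by lra.
  pose proof (hil_alg _ _ _ _ HA HC HE HBC eq_refl) as [Hh [Htu Htv]].
  assert (Hhil : hilbert_disk a b = 2 * arcsinh (sqrt (dot a (psub b a) ^ 2 - dot (psub b a) (psub b a) * (dot a a - 1)) /
      sqrt (- (dot a a - 1) * (- (dot a a - 1) - 2 * dot a (psub b a) - dot (psub b a) (psub b a))))).
  { rewrite <- Hh. unfold hilbert_disk, disk_u, disk_v, disk_tu, disk_tv. cbv zeta.
    rewrite N_ub, N_av, N_ua, N_bv by lra.
    f_equal. assert (0 < sqrt (dot (psub b a) (psub b a))) by (apply sqrt_lt_R0; auto).
    assert (F1 := div_neg _ _ HA Htu). assert (F2 := div_gt1 _ _ HA Htv).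
    field. repeat split; lra. }
  assert (Hrho : rho_disk a b = 2 * arcsinh (sqrt (dot (psub b a) (psub b a)) /
      sqrt (- (dot a a - 1) * (- (dot a a - 1) - 2 * dot a (psub b a) - dot (psub b a) (psub b a))))).
  { unfold rho_disk. unfold norm at 1. rewrite L_ab. rewrite !norm_sq. rewrite Hbb.
    do 4 f_equal. ring. }
  assert (Hm2 : 1 - m ^ 2 = (dot a (psub b a) ^ 2 - dot (psub b a) (psub b a) * (dot a a - 1)) / dot (psub b a) (psub b a)).
  { unfold m, dist0_line. rewrite norm_sq, L_line. field. lra. }
  assert (Hm0 : 0 <= m ^ 2) by apply pow2_ge_0.
  assert (HmR : sqrt (1 - m^2) = sqrt (dot a (psub b a) ^ 2 - dot (psub b a) (psub b a) * (dot a a - 1)) / sqrt (dot (psub b a) (psub b a))).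
  { rewrite Hm2. apply sqrt_div_alt. auto. }
  assert (HDA : dot a (psub b a) ^ 2 - dot (psub b a) (psub b a) * (dot a a - 1) <= dot (psub b a) (psub b a)).
  { assert ((dot a (psub b a) ^ 2 - dot (psub b a) (psub b a) * (dot a a - 1)) / dot (psub b a) (psub b a) <= 1) by lra.
    apply Rmult_le_compat_r with (r := dot (psub b a) (psub b a)) in H; [|lra].
    field_simplify in H; lra. }
  assert (HsA : sqrt (dot a (psub b a) ^ 2 - dot (psub b a) (psub b a) * (dot a a - 1)) <= sqrt (dot (psub b a) (psub b a)))
    by (apply sqrt_le_1_alt; auto).
  assert (Hs : 0 < sqrt (dot a (psub b a) ^ 2 - dot (psub b a) (psub b a) * (dot a a - 1))) by (apply sqrt_lt_R0; nra).
  assert (HsA0 : 0 < sqrt (dot (psub b a) (psub b a))) by (apply sqrt_lt_R0; auto).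
  assert (Hw : 0 < sqrt (- (dot a a - 1) * (- (dot a a - 1) - 2 * dot a (psub b a) - dot (psub b a) (psub b a)))) by (apply sqrt_lt_R0; nra).
  assert (Hmeq : m = 0 -> sqrt (dot a (psub b a) ^ 2 - dot (psub b a) (psub b a) * (dot a a - 1)) = sqrt (dot (psub b a) (psub b a))).
  { intros H0. rewrite H0 in HmR. replace (1 - 0^2) with 1 in HmR by ring. rewrite sqrt_1 in HmR.
    revert HmR. generalize (sqrt (dot a (psub b a) ^ 2 - dot (psub b a) (psub b a) * (dot a a - 1))).
    intros r Hr. replace r with ((r / sqrt (dot (psub b a) (psub b a))) * sqrt (dot (psub b a) (psub b a))) by (field; lra).
    rewrite <- Hr. ring. }
  rewrite HmR, Hhil, Hrho.
  clear - Hs HsA0 Hw HsA Hmeq.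
  remember (sqrt (dot a (psub b a) ^ 2 - dot (psub b a) (psub b a) * (dot a a - 1))) as s eqn:Es.
  remember (sqrt (dot (psub b a) (psub b a))) as sA eqn:EsA.
  remember (sqrt (- (dot a a - 1) * (- (dot a a - 1) - 2 * dot a (psub b a) - dot (psub b a) (psub b a)))) as w eqn:Ew.
  clear Es EsA Ew.
  assert (Hk : 1 <= sA / s).
  { apply Rmult_le_reg_r with s; auto. unfold Rdiv. rewrite Rmult_assoc, Rinv_l; lra. }
  assert (HS : 0 <= s / w) by (unfold Rdiv; apply Rmult_le_pos; [lra | left; apply Rinv_0_lt_compat; auto]).
  assert (HkS : sA / w = (sA / s) * (s / w)) by (field; lra).
  split; [| split].
  - apply Rmult_le_compat_l; [lra|]. apply arcsinh_le.
    unfold Rdiv. apply Rmult_le_compat_r; [left; apply Rinv_0_lt_compat; auto | lra].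
  - rewrite HkS. pose proof (arcsinh_conv (sA / s) (s / w) Hk HS).
    replace (2 * arcsinh (s / w) / (s / sA)) with (2 * ((sA / s) * arcsinh (s / w))) by (field; lra).
    lra.
  - intros Hm. rewrite (Hmeq Hm). split; [reflexivity|]. field. lra.
Qed.
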